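(* Let $n\geq 3$ and let $C_n^*$ be the bigraded complex described in the context. Let $\phi\colon C_n^*\to C_n^*$ be an $R$-linear chain map that is homogeneous of bigrading $(c_1,c_2)$ with $c_1>-2n$ and $c_2>-2n$, and suppose that the image of $\phi(\alpha_n^* )$ is a boundary in the complex $C_n^*\otimes_R \mathbb{F}[\mathcal{U}]/(\mathcal{U}^{n-1})$, where $\mathcal{V}$ acts on $\mathbb{F}[\mathcal{U}]/(\mathcal{U}^{n-1})$ as $1$. Then $\phi(\alpha_n^* )$ is divisible by $\mathcal{U}^{n-1}$.
   Context: Let $\mathbb{F}=\mathbb{Z}/2$ and $R=\mathbb{F}[\mathcal{U},\mathcal{V}]$, bigraded by $(\operatorname{gr}_{\mathcal{U}},\operatorname{gr}_{\mathcal{V}})$ with $\mathcal{U}$ of bigrading $(-2,0)$ and $\mathcal{V}$ of bigrading $(0,-2)$. For $n\geq 3$, $C_n^*$ is the free $R$-module with basis $\alpha^*_s$ ($1\leq s\leq 2n-1$); $\widetilde{\alpha}^*_s$ ($1\leq s\leq n-2$ and $n+1\leq s\leq 2n-2$); $b^{*,(s)}_{n-1}$ ($1\leq s\leq n-2$); $b^{*,(s)}_{n}$ ($1\leq s\leq 2n-2$); $b^{*,(s)}_{n+1}$ ($n+1\leq s\leq 2n-2$), with $R$-linear differential $\partial$ given by $\partial\alpha^*_s=0$, $\partial\widetilde{\alpha}^*_s=0$, and $\partial b^{*,(s)}_{n-1}=\mathcal{U}^{n(n-1)/2}\mathcal{V}^{n(n-1)/2}\alpha^*_s+\mathcal{V}^{n-s-1}\widetilde{\alpha}^*_s$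 for $1\leq s\leq n-2$; $\partial b^{*,(s)}_{n}=\mathcal{U}^{n(n+1)/2-s}\mathcal{V}^{n(n+1)/2}\alpha^*_{s+1}+\mathcal{U}^{n}\widetilde{\alpha}^*_s$ for $1\leq s\leq n-2$; $\partial b^{*,(s)}_{n}=\mathcal{U}^{n(n+1)/2}\mathcal{V}^{n(n-1)/2-n+s+1}\alpha^*_s+\mathcal{U}^{n(n+1)/2-s}\mathcal{V}^{n(n+1)/2}\alpha^*_{s+1}$ for $n-1\leq s\leq n$; $\partial b^{*,(s)}_{n}=\mathcal{U}^{n(n+1)/2}\mathcal{V}^{n(n-1)/2-n+s+1}\alpha^*_s+\mathcal{V}^{n}\widetilde{\alpha}^*_s$ for $n+1\leq s\leq 2n-2$; $\partial b^{*,(s)}_{n+1}=\mathcal{U}^{n(n-1)/2}\mathcal{V}^{n(n-1)/2}\alpha^*_{s+1}+\mathcal{U}^{s-n}\widetilde{\alpha}^*_s$ for $n+1\leq s\leq 2n-2$. The basis elements are assigned bigradings so that $\partial$ is homogeneous of bigrading $(-1,-1)$ (unique up to an overall shift; any such choice is fixed). A map is homogeneous of bigrading $(c_1,c_2)$ if it sends homogeneous elements of bigrading $(a,b)$ to homogeneous elements of bigrading $(a+c_1,b+c_2)$. *)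

(* Defs.v *)
From HB Require Import structures.
From mathcomp Require Import all_boot all_order all_algebra.
Set Implicit Arguments. Unset Strict Implicit. Unset Printing Implicit Defensive.
Import Order.TTheory GRing.Theory Num.Theory.
Local Open Scope ring_scope.

Notation F2 := 'F_2.

(* R = F[U,V], represented as (F[U])[V]: the outer polynomial variable is V,
   the inner one is U.  The coefficient of U^i V^j in p : R is (p`_j)`_i. *)
Notation Rbi := {poly {poly F2}}.
Definition varU : Rbi := ('X : {poly F2})%:P.
Definition varV : Rbi := 'X.
Definition mono (i j : nat) : Rbi := varU ^+ i * varV ^+ j.
Definition coefUV (p : Rbi) (i j : nat) : F2 := (p`_j)`_i.

(* Generators of C_n^*: a pair (k, s) with
   k = 0 : alpha*_s                1 <= s <= 2n-1
   k = 1 : alpha~*_s               1 <= s <= n-2  or  n+1 <= s <= 2n-2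
   k = 2 : b*_{n-1}^{(s)}          1 <= s <= n-2
   k = 3 : b*_{n}^{(s)}            1 <= s <= 2n-2
   k = 4 : b*_{n+1}^{(s)}          n+1 <= s <= 2n-2 *)
Definition gen_valid (n : nat) (x : 'I_5 * 'I_(2 * n)) : bool :=
  let k := nat_of_ord x.1 in let s := nat_of_ord x.2 in
  match k with
  | 0 => (1 <= s <= 2 * n - 1)%N
  | 1 => ((1 <= s <= n - 2) || (n + 1 <= s <= 2 * n - 2))%N
  | 2 => (1 <= s <= n - 2)%N
  | 3 => (1 <= s <= 2 * n - 2)%N
  | _ => (n + 1 <= s <= 2 * n - 2)%N
  end.

Definition gen (n : nat) := {x : 'I_5 * 'I_(2 * n) | @gen_valid n x}.

Definition gkind n (g : gen n) : nat := nat_of_ord (val g).1.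
Definition gidx n (g : gen n) : nat := nat_of_ord (val g).2.

Definition tA (n : nat) : nat := (n * n.-1)./2.
Definition tB (n : nat) : nat := (n * n.+1)./2.

(* coefficient of generator (k', s') in the differential of generator (k, s) *)
Definition rawd (n k s k' s' : nat) : Rbi :=
  let a := tA n in let b := tB n in
  let at_ (kk ss : nat) (m : Rbi) := if (k' == kk)%N && (s' == ss)%N then m else 0 in
  match k with
  | 2 => at_ 0%N s (mono a a) + at_ 1%N s (mono 0 (n - s - 1))
  | 3 =>
    if (s <= n - 2)%N then at_ 0%N s.+1 (mono (b - s) b) + at_ 1%N s (mono n 0)
    else if (s <= n)%N then at_ 0%N s (mono b (a + (s.+1 - n))) + at_ 0%N s.+1 (mono (b - s) b)
    else at_ 0%N s (mono b (a + (s.+1 - n))) + at_ 1%N s (mono 0 n)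
  | 4 => at_ 0%N s.+1 (mono a a) + at_ 1%N s (mono (s - n) 0)
  | _ => 0
  end.

Notation Cmod n := {ffun gen n -> Rbi^o}.

Definition basis n (g : gen n) : Cmod n := [ffun z => (z == g)%:R].

Definition dgen n (g : gen n) : Cmod n := [ffun z => rawd n (gkind g) (gidx g) (gkind z) (gidx z)].
Definition dC n (x : Cmod n) : Cmod n := [ffun z => \sum_(g : gen n) x g * dgen g z].

(* x : C_n^* is homogeneous of bigrading (a, b) w.r.t. the bigrading gr of the
   basis: every monomial U^i V^j y (y a generator) occurring in x has bigrading
   gr y + (-2i, -2j) = (a, b).  (0 is homogeneous of every bigrading.) *)
Definition homog n (gr : gen n -> int * int) (x : Cmod n) (a b : int) : Prop :=
  forall (z : gen n) (i j : nat), coefUV (x z) i j != 0 ->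
    (gr z).1 - 2 * (i%:Z) = a /\ (gr z).2 - 2 * (j%:Z) = b.

Definition map_homog n (gr : gen n -> int * int) (f : Cmod n -> Cmod n) (c1 c2 : int) : Prop :=
  forall (x : Cmod n) (a b : int), homog gr x a b -> homog gr (f x) (a + c1) (b + c2).

(* C_n^* (x)_R F[U]/(U^(n-1)), with V acting as 1: elements are represented by
   coefficient vectors in F[U] (taken modulo U^(n-1)); the differential is that
   of C_n^* with V set to 1. *)
Notation Cbar n := {ffun gen n -> {poly F2}}.
Definition setV1 (p : Rbi) : {poly F2} := p.[1].
Definition dbar n (y : Cbar n) : Cbar n :=
  [ffun z => \sum_(g : gen n) y g * setV1 (dgen g z)].
Definition reduce n (x : Cmod n) : Cbar n := [ffun z => setV1 (x z)].

Definition is_boundary_mod (n m : nat) (x : Cbar n) : Prop :=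
  exists y : Cbar n, forall z : gen n, ('X ^+ m : {poly F2}) %| (dbar y z - x z).

(* Main.v *)
Require Import Defs.
From HB Require Import structures.
From mathcomp Require Import all_boot all_order all_algebra.
From mathcomp Require Import zify.
Import Order.TTheory GRing.Theory Num.Theory.
Local Open Scope ring_scope.

Lemma tB_tA n : (0 < n)%N -> tB n = (tA n + n)%N.
Proof.
move=> hn; rewrite /tB /tA.
have -> : (n * n.+1 = n * n.-1 + n.*2)%N.
  by case: n hn => // m _ /=; rewrite !mulnS -addnn; lia.
by rewrite halfD odd_double andbF doubleK.
Qed.

Lemma tA_ge n : (3 <= n)%N -> (n <= tA n)%N.
Proof.
move=> hn; rewrite /tA.
have h := halfK (n * n.-1).
have : (n * n.-1 >= n * 2)%N.
  by rewrite leq_mul2l; apply/orP; right; lia.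
have ho : (odd (n * n.-1) <= 1)%N by case: odd.
lia.
Qed.

Lemma coefUV_mono i j i' j' : coefUV (mono i j) i' j' = ((i' == i) && (j' == j))%:R.
Proof.
rewrite /coefUV /mono /varU /varV -rmorphXn coefCM coefXn.
case: (j' == j); last by rewrite mulr0 coef0 andbF.
by rewrite mulr1 coefXn andbT.
Qed.

Lemma coefUV_mono_ne i j : coefUV (mono i j) i j != 0.
Proof. by rewrite coefUV_mono !eqxx. Qed.

Lemma setV1_mono i j : setV1 (mono i j) = 'X^i.
Proof. by rewrite /setV1 /mono /varU /varV -rmorphXn hornerCM hornerXn expr1n mulr1. Qed.

Lemma homog_basis n (gr : gen n -> int * int) (g : gen n) :
  homog gr (basis g) (gr g).1 (gr g).2.
Proof.
move=> z i j; rewrite /basis ffunE /coefUV.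
case E: (z == g); last by rewrite coef0 coef0 eqxx.
rewrite (eqP E) coef1; case E2: (j == 0)%N; last by rewrite coef0 eqxx.
rewrite coef1; case E3: (i == 0)%N; last by rewrite eqxx.
by rewrite (eqP E2) (eqP E3) !mulr0 !subr0.
Qed.

Lemma dC_basis n (g : gen n) : dC (basis g) = dgen g.
Proof.
apply/ffunP => z; rewrite ffunE (bigD1 g) //= big1 ?addr0.
  by rewrite /basis ffunE eqxx mul1r.
by move=> h hh; rewrite /basis ffunE (negbTE hh) mul0r.
Qed.

Lemma edge n (gr : gen n -> int * int) (hgr : map_homog gr (@dC n) (-1) (-1))
  (g z : gen n) k s k' s' i j :
  gkind g = k -> gidx g = s -> gkind z = k' -> gidx z = s' ->
  rawd n k s k' s' = mono i j ->
  (gr z).1 - 2 * i%:Z = (gr g).1 - 1 /\ (gr z).2 - 2 * j%:Z = (gr g).2 - 1.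
Proof.
move=> hk hs hk' hs' hr.
have := hgr _ _ _ (@homog_basis _ gr g) z i j.
rewrite dC_basis /dgen ffunE hk hs hk' hs' hr coefUV_mono_ne.
by move=> /(_ isT).
Qed.

Arguments edge {n gr} hgr {g z k s k' s' i j}.

Lemma exgen n k s (hk : (k < 5)%N) (hs : (s < 2 * n)%N) :
  @gen_valid n (Ordinal hk, Ordinal hs) -> exists g : gen n, gkind g = k /\ gidx g = s.
Proof. by move=> hv; exists (exist (fun x => is_true (@gen_valid n x)) _ hv). Qed.

Lemma gen0 n s : (1 <= s)%N -> (s <= 2 * n - 1)%N -> exists g : gen n, gkind g = 0%N /\ gidx g = s.
Proof. move=> h1 h2; have hs : (s < 2 * n)%N by lia. by apply: (@exgen n 0 s isT hs); rewrite /gen_valid /=; lia. Qed.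
Lemma gen1 n s : (1 <= s)%N -> (s <= n - 2)%N || (n + 1 <= s <= 2 * n - 2)%N -> exists g : gen n, gkind g = 1%N /\ gidx g = s.
Proof. move=> h1 h2; have hs : (s < 2 * n)%N by lia. by apply: (@exgen n 1 s isT hs); rewrite /gen_valid /=; lia. Qed.
Lemma gen2 n s : (1 <= s)%N -> (s <= n - 2)%N -> exists g : gen n, gkind g = 2%N /\ gidx g = s.
Proof. move=> h1 h2; have hs : (s < 2 * n)%N by lia. by apply: (@exgen n 2 s isT hs); rewrite /gen_valid /=; lia. Qed.
Lemma gen3 n s : (1 <= s)%N -> (s <= 2 * n - 2)%N -> exists g : gen n, gkind g = 3%N /\ gidx g = s.
Proof. move=> h1 h2; have hs : (s < 2 * n)%N by lia. by apply: (@exgen n 3 s isT hs); rewrite /gen_valid /=; lia. Qed.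
Lemma gen4 n s : (n + 1 <= s)%N -> (s <= 2 * n - 2)%N -> exists g : gen n, gkind g = 4%N /\ gidx g = s.
Proof. move=> h1 h2; have hs : (s < 2 * n)%N by lia. by apply: (@exgen n 4 s isT hs); rewrite /gen_valid /=; lia. Qed.

Lemma gen_valid_bounds n (g : gen n) :
  match gkind g with
  | 0 => (1 <= gidx g <= 2 * n - 1)%N
  | 1 => ((1 <= gidx g <= n - 2) || (n + 1 <= gidx g <= 2 * n - 2))%N
  | 2 => (1 <= gidx g <= n - 2)%N
  | 3 => (1 <= gidx g <= 2 * n - 2)%N
  | _ => (n + 1 <= gidx g <= 2 * n - 2)%N
  end.
Proof. by case: g => x hx. Qed.

Section Raw.
Variable n : nat.
Local Notation a := (tA n).
Local Notation b := (tB n).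

Lemma r2A s : rawd n 2 s 0 s = mono a a.
Proof. by rewrite /rawd /= eqxx addr0. Qed.
Lemma r2T s : rawd n 2 s 1 s = mono 0 (n - s - 1).
Proof. by rewrite /rawd /= eqxx add0r. Qed.
Lemma r3L s : (s <= n - 2)%N -> rawd n 3 s 0 s.+1 = mono (b - s) b.
Proof. by move=> h; rewrite /rawd /= h eqxx addr0. Qed.
Lemma r3LT s : (s <= n - 2)%N -> rawd n 3 s 1 s = mono n 0.
Proof. by move=> h; rewrite /rawd /= h eqxx add0r. Qed.
Lemma r3M s : (n - 2 < s)%N -> (s <= n)%N -> rawd n 3 s 0 s = mono b (a + (s.+1 - n)).
Proof.
move=> h1 h2; rewrite /rawd /= ifF; last by lia.
by rewrite h2 eqxx /= (_ : (s == s.+1) = false) ?addr0 //; lia.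
Qed.
Lemma r3M' s : (n - 2 < s)%N -> (s <= n)%N -> rawd n 3 s 0 s.+1 = mono (b - s) b.
Proof.
move=> h1 h2; rewrite /rawd /= ifF; last by lia.
by rewrite h2 eqxx /= (_ : (s.+1 == s) = false) ?add0r //; lia.
Qed.
Lemma r3R s : (n < s)%N -> rawd n 3 s 0 s = mono b (a + (s.+1 - n)).
Proof.
move=> h1; rewrite /rawd /= ifF; last by lia.
by rewrite ifF; [rewrite eqxx addr0 | lia].
Qed.
Lemma r3RT s : (n < s)%N -> rawd n 3 s 1 s = mono 0 n.
Proof.
move=> h1; rewrite /rawd /= ifF; last by lia.
by rewrite ifF; [rewrite eqxx add0r | lia].
Qed.
Lemma r4A s : rawd n 4 s 0 s.+1 = mono a a.
Proof. by rewrite /rawd /= eqxx addr0. Qed.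
Lemma r4T s : rawd n 4 s 1 s = mono (s - n) 0.
Proof. by rewrite /rawd /= eqxx add0r. Qed.

End Raw.

Section Grad.
Variable n : nat.
Hypothesis hn : (3 <= n)%N.
Variable gr : gen n -> int * int.
Hypothesis hgr : map_homog gr (@dC n) (-1) (-1).
Variable al : gen n.
Hypothesis hak : gkind al = 0%N.
Hypothesis has : gidx al = n.

Lemma left_bound d : forall t, (1 <= t)%N -> (t + d = n - 1)%N ->
  forall z : gen n, gkind z = 0%N -> gidx z = t -> (gr z).2 <= (gr al).2 - 2 * n%:Z.
Proof.
have hba := @tB_tA n (ltnW (ltnW hn)). have hag := @tA_ge n hn.
elim: d => [|d IH] t h1 h2 z hzk hzs.
  have [g3 [h3k h3s]] := @gen3 n (n - 1) ltac:(lia) ltac:(lia).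
  have [_ e1] := edge hgr h3k h3s hzk (ltac:(rewrite hzs; lia) : gidx z = n - 1)%N (@r3M n (n-1) ltac:(lia) ltac:(lia)).
  have [_ e2] := edge hgr h3k h3s hak (ltac:(rewrite has; lia) : gidx al = (n - 1).+1)%N (@r3M' n (n-1) ltac:(lia) ltac:(lia)).
  lia.
have [a1 [a1k a1s]] := @gen0 n t.+1 ltac:(lia) ltac:(lia).
have hb1 := IH t.+1 ltac:(lia) ltac:(lia) a1 a1k a1s.
have [tl [tlk tls]] := @gen1 n t ltac:(lia) ltac:(apply/orP; left; lia).
have [g2 [g2k g2s]] := @gen2 n t ltac:(lia) ltac:(lia).
have [g3 [g3k g3s]] := @gen3 n t ltac:(lia) ltac:(lia).
have [_ e1] := edge hgr g2k g2s hzk hzs (r2A _ _).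
have [_ e2] := edge hgr g2k g2s tlk tls (r2T _ _).
have [_ e3] := edge hgr g3k g3s tlk tls (@r3LT n t ltac:(lia)).
have [_ e4] := edge hgr g3k g3s a1k a1s (@r3L n t ltac:(lia)).
lia.
Qed.

Lemma right_bound d : forall t, (t = n + 1 + d)%N -> (t <= 2 * n - 1)%N ->
  forall z : gen n, gkind z = 0%N -> gidx z = t -> (gr z).1 <= (gr al).1 - 2 * n%:Z.
Proof.
have hba := @tB_tA n (ltnW (ltnW hn)). have hag := @tA_ge n hn.
elim: d => [|d IH] t h1 h2 z hzk hzs.
  have [g3 [h3k h3s]] := @gen3 n n ltac:(lia) ltac:(lia).
  have [e1 _] := edge hgr h3k h3s hak has (@r3M n n ltac:(lia) ltac:(lia)).
  have [e2 _] := edge hgr h3k h3s hzk (ltac:(rewrite hzs; lia) : gidx z = n.+1)%N (@r3M' n n ltac:(lia) ltac:(lia)).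
  lia.
have [a0 [a0k a0s]] := @gen0 n (t.-1) ltac:(lia) ltac:(lia).
have hb0 := IH t.-1 ltac:(lia) ltac:(lia) a0 a0k a0s.
have [tl [tlk tls]] := @gen1 n t.-1 ltac:(lia) ltac:(apply/orP; right; lia).
have [g3 [g3k g3s]] := @gen3 n t.-1 ltac:(lia) ltac:(lia).
have [g4 [g4k g4s]] := @gen4 n t.-1 ltac:(lia) ltac:(lia).
have [e1 _] := edge hgr g3k g3s a0k a0s (@r3R n t.-1 ltac:(lia)).
have [e2 _] := edge hgr g3k g3s tlk tls (@r3RT n t.-1 ltac:(lia)).
have [e3 _] := edge hgr g4k g4s hzk (ltac:(rewrite hzs; lia) : gidx z = t.-1.+1)%N (@r4A n t.-1).
have [e4 _] := edge hgr g4k g4s tlk tls (@r4T n t.-1).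
lia.
Qed.

Lemma far (z : gen n) : ~ (gkind z = 0%N /\ gidx z = n) ->
  (gr z).1 <= (gr al).1 - 2 * n%:Z \/ (gr z).2 <= (gr al).2 - 2 * n%:Z.
Proof.
move=> hne.
have hba := @tB_tA n (ltnW (ltnW hn)). have hag := @tA_ge n hn.
have hv := @gen_valid_bounds n z.
case hk: (gkind z) hv => [|[|[|[|k]]]] hv.
- case: (ltngtP (gidx z) n) => hs.
  + right; exact: (@left_bound (n - 1 - gidx z) (gidx z) ltac:(lia) ltac:(lia) z hk erefl).
  + left; exact: (@right_bound (gidx z - n - 1) (gidx z) ltac:(lia) ltac:(lia) z hk erefl).
  + by case: hne.
- case/orP: hv => hv.
  + have [a1 [a1k a1s]] := @gen0 n (gidx z).+1 ltac:(lia) ltac:(lia).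
    have hb1 := @left_bound (n - 2 - gidx z) (gidx z).+1 ltac:(lia) ltac:(lia) a1 a1k a1s.
    have [g3 [g3k g3s]] := @gen3 n (gidx z) ltac:(lia) ltac:(lia).
    have [_ e3] := edge hgr g3k g3s hk erefl (@r3LT n (gidx z) ltac:(lia)).
    have [_ e4] := edge hgr g3k g3s a1k a1s (@r3L n (gidx z) ltac:(lia)).
    right; lia.
  + have [a0 [a0k a0s]] := @gen0 n (gidx z) ltac:(lia) ltac:(lia).
    have hb0 := @right_bound (gidx z - n - 1) (gidx z) ltac:(lia) ltac:(lia) a0 a0k a0s.
    have [g3 [g3k g3s]] := @gen3 n (gidx z) ltac:(lia) ltac:(lia).
    have [e1 _] := edge hgr g3k g3s a0k a0s (@r3R n (gidx z) ltac:(lia)).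
    have [e2 _] := edge hgr g3k g3s hk erefl (@r3RT n (gidx z) ltac:(lia)).
    left; lia.
- have [a0 [a0k a0s]] := @gen0 n (gidx z) ltac:(lia) ltac:(lia).
  have hb0 := @left_bound (n - 1 - gidx z) (gidx z) ltac:(lia) ltac:(lia) a0 a0k a0s.
  have [_ e1] := edge hgr hk erefl a0k a0s (@r2A n (gidx z)).
  right; lia.
- case: (ltngtP (gidx z) (n - 2)) => hs.
  + have [a1 [a1k a1s]] := @gen0 n (gidx z).+1 ltac:(lia) ltac:(lia).
    have hb1 := @left_bound (n - 2 - gidx z) (gidx z).+1 ltac:(lia) ltac:(lia) a1 a1k a1s.
    have [_ e4] := edge hgr hk erefl a1k a1s (@r3L n (gidx z) ltac:(lia)).
    right; lia.
  + case: (ltngtP (gidx z) n) => hs2.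
    * have [_ e] := edge hgr hk erefl hak (ltac:(rewrite has; lia) : gidx al = (gidx z).+1)%N (@r3M' n (gidx z) ltac:(lia) ltac:(lia)).
      right; lia.
    * have [a0 [a0k a0s]] := @gen0 n (gidx z) ltac:(lia) ltac:(lia).
      have hb0 := @right_bound (gidx z - n - 1) (gidx z) ltac:(lia) ltac:(lia) a0 a0k a0s.
      have [e1 _] := edge hgr hk erefl a0k a0s (@r3R n (gidx z) ltac:(lia)).
      left; lia.
    * have [e _] := edge hgr hk erefl hak (ltac:(rewrite has; lia) : gidx al = gidx z)%N (@r3M n (gidx z) ltac:(lia) ltac:(lia)).
      left; lia.
  + have [a1 [a1k a1s]] := @gen0 n (gidx z).+1 ltac:(lia) ltac:(lia).
    have hb1 := @left_bound 0 (gidx z).+1 ltac:(lia) ltac:(lia) a1 a1k a1s.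
    have [_ e4] := edge hgr hk erefl a1k a1s (@r3L n (gidx z) ltac:(lia)).
    right; lia.
- have hk5 : (gkind z < 5)%N := ltn_ord _.
  have k0 : k = 0%N by lia.
  rewrite k0 in hk.
  have [a1 [a1k a1s]] := @gen0 n (gidx z).+1 ltac:(lia) ltac:(lia).
  have hb1 := @right_bound ((gidx z).+1 - n - 1) (gidx z).+1 ltac:(lia) ltac:(lia) a1 a1k a1s.
  have [e1 _] := edge hgr hk erefl a1k a1s (@r4A n (gidx z)).
  left; lia.
Qed.

End Grad.

Lemma coefUV_nz (p : Rbi) : p != 0 -> exists i j, coefUV p i j != 0.
Proof.
move=> hp; exists (size (p`_(size p).-1)).-1, (size p).-1.
rewrite /coefUV -/(lead_coef (p`_(size p).-1)) lead_coef_eq0.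
by rewrite -/(lead_coef p) lead_coef_eq0.
Qed.

Definition Dv (m : nat) (p : Rbi) := ('X^m : {poly F2}) %| setV1 p.

Lemma Dv0 m : Dv m 0.
Proof. by rewrite /Dv /setV1 horner0 dvdp0. Qed.
Lemma DvD m p q : Dv m p -> Dv m q -> Dv m (p + q).
Proof. by rewrite /Dv /setV1 hornerD; apply: dvdp_add. Qed.
Lemma Dvif m (c : bool) p : (c -> Dv m p) -> Dv m (if c then p else 0).
Proof. by case: c => [->|_] //; exact: Dv0. Qed.
Lemma Dvmono m i j : (m <= i)%N -> Dv m (mono i j).
Proof. by move=> h; rewrite /Dv setV1_mono dvdp_exp2l. Qed.

Lemma Dv_raw n k s : (3 <= n)%N -> Dv n.-1 (rawd n k s 0 n).
Proof.
move=> hn.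
have hba := @tB_tA n (ltnW (ltnW hn)). have hag := @tA_ge n hn.
rewrite /rawd.
case: k => [|[|[|[|[|k]]]]] /=; try exact: Dv0;
repeat (first [exact: Dv0 | apply: DvD | apply: Dvif => /eqP ?; apply: Dvmono; lia | case: ifP => ?]).
Qed.

Theorem lemma2p10 (n : nat) (hn : (3 <= n)%N)
    (gr : gen n -> int * int)
    (hgr : map_homog gr (@dC n) (-1) (-1))
    (phi : {linear Cmod n -> Cmod n})
    (c1 c2 : int)
    (hchain : forall x : Cmod n, phi (dC x) = dC (phi x))
    (hphi : map_homog gr phi c1 c2)
    (hc1 : - (2 * n%:Z) < c1) (hc2 : - (2 * n%:Z) < c2)
    (alpha_n : gen n) (halpha : gkind alpha_n = 0%N /\ gidx alpha_n = n)
    (hbd : @is_boundary_mod n n.-1 (reduce (phi (basis alpha_n)))) :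
  exists w : Cmod n, phi (basis alpha_n) = varU ^+ n.-1 *: w.
Proof.
case: halpha => hak has.
set x := phi (basis alpha_n).
have hx : homog gr x ((gr alpha_n).1 + c1) ((gr alpha_n).2 + c2).
  exact: hphi (@homog_basis _ gr alpha_n).
have hoth : forall z, z != alpha_n -> x z = 0.
  move=> z hz; apply/eqP; apply: contraT => nz.
  have [i [j hij]] := @coefUV_nz (x z) nz.
  have [e1 e2] := hx z i j hij.
  have hne : ~ (gkind z = 0%N /\ gidx z = n).
    case=> k0 s0; move/negP: hz; apply; apply/eqP; apply: val_inj.
    move: k0 s0 hak has; rewrite /gkind /gidx.
    case: (val z) => [u1 u2]; case: (val alpha_n) => [v1 v2] /= h1 h2 h3 h4.
    by congr pair; apply: val_inj; rewrite /= ?h1 ?h2 ?h3 ?h4.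
  have := @far n hn gr hgr alpha_n hak has z hne.
  lia.
have hi : forall i j, coefUV (x alpha_n) i j != 0 -> (n.-1 <= i)%N.
  move=> i j hij; rewrite leqNgt; apply/negP => hlt.
  have [e1 e2] := hx _ _ _ hij.
  set p := x alpha_n in hij e1 e2 *.
  have hj : forall j', coefUV p i j' != 0 -> j' = j.
    move=> j' h'; have [_ e2'] := hx _ _ _ h'; lia.
  have hjs : (j < size p)%N.
    rewrite ltnNge; apply/negP => hs; move: hij.
    by rewrite /coefUV (nth_default _ hs) coef0 eqxx.
  have hcoef : p.[1]`_i != 0.
    rewrite horner_coef coef_sum.
    under eq_bigr do rewrite expr1n mulr1.
    rewrite (bigD1 (Ordinal hjs)) //= big1 ?addr0 //.
    move=> k hk; apply/eqP; apply: contraT => h.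
    have e := hj _ h; move: hk; rewrite (_ : k = Ordinal hjs) ?eqxx //; apply: val_inj; exact: e.
  have [y hy] := hbd.
  have hd : ('X^(n.-1) : {poly F2}) %| dbar y alpha_n.
    rewrite /dbar ffunE; apply: (big_ind (fun q : {poly F2} => 'X^(n.-1) %| q)).
    - exact: dvdp0.
    - by move=> u v; apply: dvdp_add.
    - move=> g _; apply: dvdp_mull; rewrite /dgen ffunE hak has.
      exact: Dv_raw.
  have hy' : ('X^(n.-1) : {poly F2}) %| dbar y alpha_n - p.[1].
    by move: (hy alpha_n); rewrite /reduce [X in _ - X]ffunE.
  move: hy'.
  rewrite (dvdp_subr _ hd) => hdp.
  move: hcoef; rewrite -(divpK hdp) coefMXn hlt eqxx //.
exists [ffun z => if z == alpha_n then map_poly (drop_poly n.-1) (x alpha_n) else 0].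
apply/ffunP => z; rewrite !ffunE.
case: eqP => [->|/eqP hz]; last by rewrite hoth // scaler0.
change (x alpha_n = varU ^+ n.-1 * map_poly (drop_poly n.-1) (x alpha_n)).
rewrite /varU -rmorphXn; apply/polyP => j.
rewrite coefCM coef_map_id0 ?drop_poly0r //.
rewrite -{1}(poly_take_drop n.-1 ((x alpha_n)`_j)) mulrC.
suff -> : take_poly n.-1 (x alpha_n)`_j = 0 by rewrite add0r.
apply/polyP => i; rewrite coef_take_poly coef0.
case: ifP => // hi'; apply/eqP; apply: contraT => h.
have := hi i j h; lia.
Qed.
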